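(* Let $p$ be a prime, $e\ge1$, $q=p^e$, $0\le\ell\le e-1$, and let $a\in\mathbb{F}_q$, $a\ne0$. Let $M$ be the $n\times n$ matrix whose columns $\varphi_1,\dots,\varphi_n\in\mathbb{F}_q^n$ form an $\ell$-Galois $(a,0,a)$-equiangular tight frame for $\mathbb{F}_q^n$, and let $G_0=[I_n\mid M]$. Let $\mathcal{C}\subseteq\mathbb{F}_q^{2n}$ be the linear code generated by the rows of $G_0$. If $a=-1$, then $\mathcal{C}$ is an $\ell$-Galois self-dual code, and if $a\neq-1$, then $\mathcal{C}$ is an $\ell$-Galois LCD code.
   Context: For vectors $\mathbf{x},\mathbf{y}$ of length $N$, $(\mathbf{x},\mathbf{y})_\ell=\sum_{i=1}^N x_i^{p^\ell}y_i$. For a matrix $\Phi$, $\Phi^{\dagger_\ell}$ is the transpose of the matrix obtained by raising each entry to the power $p^\ell$. Vectors $\varphi_1,\dots,\varphi_m\in\mathbb{F}_q^n$ with matrix $\Phi$ (columns $\varphi_i$) form an $\ell$-Galois $(a,b,c)$-equiangular tight frame if they span $\mathbb{F}_q^n$, $\Phi\Phi^{\dagger_\ell}=cI_n$, $(\varphi_i,\varphi_i)_\ell=a$ for all $i$, and $(\varphi_i,\varphi_j)_\ell(\varphi_j,\varphi_i)_\ell=b$ for all $i\neq j$. The $\ell$-Galois inner product is $\langle\mathbf{x},\mathbf{y}\rangle_\ell=\sum_i x_iy_i^{p^\ell}$; the $\ell$-Galois dual of a linear code $\mathcal{C}$ is $\mathcal{C}^{\perp_\ell}=\{\mathbf{x}:\langle\mathbf{x},\mathbf{c}\rangle_\ell=0\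 \forall\mathbf{c}\in\mathcal{C}\}$; $\mathcal{C}$ is $\ell$-Galois self-dual if $\mathcal{C}=\mathcal{C}^{\perp_\ell}$ and $\ell$-Galois LCD if $\mathcal{C}\cap\mathcal{C}^{\perp_\ell}=\{\mathbf{0}\}$. *)

(* Defs.v *)
From HB Require Import structures.
From mathcomp Require Import all_boot all_order all_algebra all_field.
Set Implicit Arguments. Unset Strict Implicit. Unset Printing Implicit Defensive.
Import GRing.Theory.
Local Open Scope ring_scope.

Section GaloisDefs.
Variables (F : fieldType) (p l : nat).

Definition frobl (x : F) : F := x ^+ (p ^ l).

Definition frame_ip (N : nat) (x y : 'cV[F]_N) : F :=
  \sum_(i < N) frobl (x i 0) * y i 0.

Definition gdagger (n m : nat) (Phi : 'M[F]_(n, m)) : 'M[F]_(m, n) :=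
  (map_mx frobl Phi)^T.

Definition galois_ETF (n m : nat) (a b c : F) (Phi : 'M[F]_(n, m)) : Prop :=
  [/\ \rank Phi = n,
      Phi *m gdagger Phi = c%:M,
      (forall i, frame_ip (col i Phi) (col i Phi) = a) &
      (forall i j, i != j ->
         frame_ip (col i Phi) (col j Phi) * frame_ip (col j Phi) (col i Phi) = b)].

Definition galois_ip (N : nat) (x y : 'rV[F]_N) : F :=
  \sum_(i < N) x 0 i * frobl (y 0 i).

Definition gen_code (k N : nat) (G : 'M[F]_(k, N)) : 'rV[F]_N -> Prop :=
  fun x => (x <= G)%MS.

Definition galois_dual (N : nat) (C : 'rV[F]_N -> Prop) : 'rV[F]_N -> Prop :=
  fun x => forall c, C c -> galois_ip x c = 0.

Definition galois_self_dual (N : nat) (C : 'rV[F]_N -> Prop) : Prop :=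
  forall x, C x <-> galois_dual C x.

Definition galois_LCD (N : nat) (C : 'rV[F]_N -> Prop) : Prop :=
  forall x, C x -> galois_dual C x -> x = 0.

End GaloisDefs.

(* Main.v *)
Require Import Defs.
From HB Require Import structures.
From mathcomp Require Import all_boot all_order all_algebra all_field.
Import GRing.Theory.
Local Open Scope ring_scope.

Section Helpers.
Variables (F : fieldType) (p l : nat).
Hypothesis pchar_p : p \in [pchar F].

Lemma frob0' (pp : prime p) : frobl p l (0 : F) = 0.
Proof. by rewrite /frobl expr0n expn_eq0 eqn0Ngt prime_gt0. Qed.

Lemma frobD : {morph frobl p l : x y / (x + y : F)}.
Proof.
move=> x y; rewrite /frobl exprDn_pchar // pnatX.
by rewrite pnatE ?pchar_p // (pcharf_prime pchar_p).
Qed.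

Lemma frobM (x y : F) : frobl p l (x * y) = frobl p l x * frobl p l y.
Proof. by rewrite /frobl exprMn. Qed.

Lemma map_mulmx m k r (u : 'M[F]_(m, k)) (G : 'M[F]_(k, r)) :
  map_mx (frobl p l) (u *m G) = map_mx (frobl p l) u *m map_mx (frobl p l) G.
Proof.
apply/matrixP => i j; rewrite !mxE.
rewrite (big_morph (frobl p l) frobD (frob0' (pcharf_prime pchar_p))).
by apply: eq_bigr => t _; rewrite frobM !mxE.
Qed.
End Helpers.

Lemma ipE (F : fieldType) p l N (x y : 'rV[F]_N) :
  galois_ip p l x y = (x *m (map_mx (frobl p l) y)^T) 0 0.
Proof. by rewrite /galois_ip !mxE; apply: eq_bigr => i _; rewrite !mxE. Qed.

Theorem mainTheorem6 (F : finFieldType) (p e l n : nat) (a : F) (M : 'M[F]_n) :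
  prime p -> (1 <= e)%N -> #|F| = (p ^ e)%N -> (l <= e - 1)%N ->
  a != 0 ->
  galois_ETF p l a 0 a M ->
  let C := gen_code (row_mx (1%:M : 'M[F]_n) M) in
  (a = -1 -> galois_self_dual p l C) /\ (a != -1 -> galois_LCD p l C).
Proof.
move=> pp e1 cardF _ a0 [_ HM _ _] C.
have chp : p \in [pchar F] by apply: (card_finPcharP cardF).
set G := row_mx (1%:M : 'M[F]_n) M.
set Gd := map_mx (frobl p l) G.
have Gd1 : map_mx (frobl p l) (1%:M : 'M[F]_n) = 1%:M.
  apply/matrixP => i j; rewrite !mxE; case: (i == j) => /=.
    by rewrite /frobl expr1n.
  exact: frob0'.
have GGd : G *m Gd^T = (1 + a)%:M.
  rewrite /Gd /G map_row_mx tr_row_mx mul_row_col Gd1 trmx1 mul1mx.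
  by rewrite -/(gdagger p l M) HM raddfD.
have dualE : forall x, galois_dual p l C x -> x *m Gd^T = 0.
  move=> x Hx; apply/rowP => i.
  have := Hx (row i G) (row_sub i G); rewrite ipE => H0.
  rewrite [RHS]mxE -H0 !mxE; apply: eq_bigr => k _; rewrite !mxE.
  by [].

split.
- move=> am1 x; split.
  + move=> /submxP [u ->] c /submxP [v ->].
    rewrite ipE (@map_mulmx _ _ l chp) trmx_mul -/Gd mulmxA -(mulmxA u) GGd am1.
    by rewrite addrN raddf0 mulmx0 mul0mx mxE.
  + move=> /dualE Hx.
    rewrite /C /gen_code.
    rewrite -(hsubmxK x) in Hx *.
    idtac.
    move: Hx; rewrite /Gd /G map_row_mx tr_row_mx mul_row_col Gd1 trmx1 mulmx1.
    rewrite -/(gdagger p l M) => /eqP; rewrite addr_eq0 => /eqP Hx1.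
    have MdM : gdagger p l M *m M = a%:M.
      have h : M *m (a^-1 *: gdagger p l M) = 1%:M.
        by rewrite -scalemxAr HM scale_scalar_mx mulVf.
      have := mulmx1C h; rewrite -scalemxAl => /(congr1 (scalemx a)).
      rewrite -!/(GRing.scale _ _) scalerA mulfV // scale1r => ->.
      by rewrite scale_scalar_mx mulr1.
    apply/submxP; exists (lsubmx x); rewrite mul_mx_row mulmx1; congr row_mx.
    by rewrite Hx1 mulNmx -mulmxA MdM am1 mul_mx_scalar scaleN1r opprK.
- move=> am1 x /submxP [u ->] /dualE.
  rewrite -mulmxA GGd mul_mx_scalar => /eqP; rewrite scaler_eq0.
  have h1 : (1 + a == 0) = false by rewrite addrC addr_eq0 (negbTE am1).
  rewrite h1 /=.
  by move/eqP ->; rewrite mul0mx.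
Qed.
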